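(* The category $\mathbf{AlgLPries}$ of algebraic L-spaces and coherent L-morphisms is equivalent to the category $\mathbf{KBSob}$ of compactly based sober spaces and coherent maps.
   Context: A Priestley space is a Stone space $X$ with a partial order such that clopen upsets separate points. An L-space is a Priestley space in which the downset of each clopen set is clopen and the closure of each open upset is open. ${\sf ClopUp}(X)$ is the set of clopen upsets; $\mathrm{cl}$ denotes closure. An L-morphism is a continuous order-preserving map $f:X\to X'$ between L-spaces with $f^{-1}(\mathrm{cl}\,U)=\mathrm{cl}\,f^{-1}(U)$ for every open upset $U$ of $X'$. The spatial part of $X$ is $Y=\{y\in X\mid{\downarrow}y\text{ clopen}\}$. A Scott upset is a closed upset $F$ with $\min F\subseteq Y$; ${\sf ClopSUp}(X)$ is the set of clopen Scott upsets; $\mathrm{core}\,U=\bigcup\{V\in{\sf ClopSUp}(X)\mid V\subseteq U\}$. $X$ is an algebraic L-space if $\mathrm{core}\,U$ is dense in $U$ for each $U\in{\sf ClopUp}(X)$. An L-morphism $f:X_1\to X_2$ is coherent if $f^{-1}(\mathrm{core}\,U)\subseteq\mathrm{core}\,f^{-1}(U)$ for all $U\in{\sf ClopUp}(X_2)$. A topological space is compactly based if it has a basis of compact open sets; sober if every irreducible closed set is the closure of a unique point. A continuous map is coherent if preimages of compact open sets are compact. *)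

(* Defs.v *)
From HB Require Import structures.
From mathcomp Require Import all_boot all_order.
From mathcomp Require Import all_classical all_reals all_analysis.

Set Implicit Arguments.
Unset Strict Implicit.
Unset Printing Implicit Defensive.

Local Open Scope classical_set_scope.

(* Identities and
   composition are the usual ones on functions; equality of morphisms is
   equality of underlying functions. *)
Record ConcreteCat := {
  cc_ob : Type;
  cc_car : cc_ob -> Type;
  cc_hom : forall A B : cc_ob, (cc_car A -> cc_car B) -> Prop }.

Record Functor (C D : ConcreteCat) := {
  F_ob : cc_ob C -> cc_ob D;
  F_mor : forall (A B : cc_ob C) (f : cc_car A -> cc_car B),
      cc_hom f -> cc_car (F_ob A) -> cc_car (F_ob B);
  F_mor_hom : forall A B (f : cc_car A -> cc_car B) (p : cc_hom f),
      cc_hom (F_mor p);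
  F_id : forall A (p : cc_hom (@id (cc_car A))), F_mor p = id;
  F_comp : forall A B E (f : cc_car A -> cc_car B) (g : cc_car B -> cc_car E)
      (p : cc_hom f) (q : cc_hom g) (r : cc_hom (g \o f)),
      F_mor r = F_mor q \o F_mor p }.

Definition nat_iso_to_id (C D : ConcreteCat) (F : Functor C D)
    (G : Functor D C) : Prop :=
  exists eta : forall A : cc_ob C, cc_car (F_ob G (F_ob F A)) -> cc_car A,
  exists eta' : forall A : cc_ob C, cc_car A -> cc_car (F_ob G (F_ob F A)),
    (forall A, cc_hom (eta A)) /\
    (forall A, cc_hom (eta' A)) /\
    (forall A, eta A \o eta' A = id /\ eta' A \o eta A = id) /\
    (forall A B (f : cc_car A -> cc_car B) (p : cc_hom f),
        f \o eta A = eta B \o @F_mor D C G _ _ _ (@F_mor_hom C D F _ _ _ p)).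

Definition cat_equivalent (C D : ConcreteCat) : Prop :=
  exists (F : Functor C D) (G : Functor D C),
    nat_iso_to_id F G /\ nat_iso_to_id G F.

Section OrderTop.
Context {T : topologicalType} (le : T -> T -> Prop).

Definition partial_order : Prop :=
  [/\ forall x, le x x,
      forall x y, le x y -> le y x -> x = y &
      forall x y z, le x y -> le y z -> le x z].

Definition is_upset (U : set T) : Prop :=
  forall x y, U x -> le x y -> U y.

Definition downset (A : set T) : set T :=
  [set x | exists2 a, A a & le x a].

Definition stone_space : Prop :=
  [/\ compact [set: T], hausdorff_space T & totally_disconnected [set: T]].

Definition priestley_space : Prop :=
  [/\ stone_space, partial_order &
      forall x y, ~ le x y ->
        exists U : set T, [/\ clopen U, is_upset U, U x & ~ U y]].

Definition L_space : Prop :=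
  [/\ priestley_space,
      forall A : set T, clopen A -> clopen (downset A) &
      forall U : set T, open U -> is_upset U -> open (closure U)].

Definition ClopUp (U : set T) : Prop := clopen U /\ is_upset U.

Definition spatial_part : set T := [set y | clopen (downset [set y])].

Definition minimals (F : set T) : set T :=
  [set x | F x /\ forall y, F y -> le y x -> y = x].

Definition scott_upset (F : set T) : Prop :=
  [/\ closed F, is_upset F & minimals F `<=` spatial_part].

Definition ClopSUp (V : set T) : Prop := clopen V /\ scott_upset V.

Definition core (U : set T) : set T :=
  \bigcup_(V in [set V | ClopSUp V /\ V `<=` U]) V.

(* core U is dense in U (in the subspace topology of U), i.e. U is
   contained in the closure of core U. *)
Definition algebraic_L_space : Prop :=
  L_space /\ forall U, ClopUp U -> U `<=` closure (core U).

End OrderTop.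

Definition L_morphism {X X' : topologicalType} (le : X -> X -> Prop)
    (le' : X' -> X' -> Prop) (f : X -> X') : Prop :=
  [/\ continuous f,
      forall x y, le x y -> le' (f x) (f y) &
      forall U : set X', open U -> is_upset le' U ->
        f @^-1` (closure U) = closure (f @^-1` U)].

Definition coherent_L_morphism {X X' : topologicalType} (le : X -> X -> Prop)
    (le' : X' -> X' -> Prop) (f : X -> X') : Prop :=
  L_morphism le le' f /\
  forall U : set X', ClopUp le' U ->
    f @^-1` (core le' U) `<=` core le (f @^-1` U).

Definition compactly_based (T : topologicalType) : Prop :=
  forall (O : set T) x, open O -> O x ->
    exists K : set T, [/\ open K, compact K, K x & K `<=` O].

Definition irreducible_closed {T : topologicalType} (C : set T) : Prop :=
  [/\ closed C, C !=set0 &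
      forall A B : set T, closed A -> closed B -> C `<=` A `|` B ->
        C `<=` A \/ C `<=` B].

Definition sober (T : topologicalType) : Prop :=
  forall C : set T, irreducible_closed C ->
    exists! x : T, C = closure [set x].

Definition coherent_map {X Y : topologicalType} (f : X -> Y) : Prop :=
  continuous f /\
  forall K : set Y, open K -> compact K -> compact (f @^-1` K).

Record AlgLSpace := {
  alg_space :> topologicalType;
  alg_le : alg_space -> alg_space -> Prop;
  alg_ax : algebraic_L_space alg_le }.

Definition AlgLPries : ConcreteCat :=
  {| cc_ob := AlgLSpace;
     cc_car := fun X => Topological.sort (alg_space X);
     cc_hom := fun X Y f => coherent_L_morphism (@alg_le X) (@alg_le Y) f |}.

Record KBSobSpace := {
  kb_space :> topologicalType;
  kb_ax : compactly_based kb_space /\ sober kb_space }.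

Definition KBSob : ConcreteCat :=
  {| cc_ob := KBSobSpace;
     cc_car := fun X => Topological.sort (kb_space X);
     cc_hom := fun X Y f => @coherent_map X Y f |}.

(* Main.v *)
Require Import Defs.
From HB Require Import structures.
From mathcomp Require Import all_boot all_order.
From mathcomp Require Import all_classical all_reals all_analysis.
Set Implicit Arguments.
Unset Strict Implicit.
Unset Printing Implicit Defensive.
Local Open Scope classical_set_scope.

Fixpoint lin (I : Type) (i : I) (s : seq I) : Prop :=
  match s with [::] => False | j :: s' => j = i \/ lin i s' end.

Lemma lin_app (I : Type) (i : I) s t : lin i s \/ lin i t -> lin i (s ++ t).
Proof. elim: s => [|j s IH] /=; first by case. by case=> [[->|h]|h]; [left|right; apply: IH; left|right; apply: IH; right]. Qed.

Section Gen.
Context {T : topologicalType}.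

Definition finter (I : Type) (f : I -> set T) (s : seq I) : set T :=
  [set x | forall i, lin i s -> f i x].

Lemma compact_fip (A : set T) (I : Type) (f : I -> set T) :
  compact A -> (forall i, closed (f i)) ->
  (forall s, (A `&` finter f s) !=set0) ->
  exists x, A x /\ forall i, f i x.
Proof.
move=> cA cf ne.
pose F := [set B : set T | exists s, A `&` finter f s `<=` B].
have FF : ProperFilter F.
  apply: Build_ProperFilter_ex.
    by move=> P [s sP]; have [x Hx] := ne s; exists x; exact: sP.
  split.
  - by exists [::].
  - move=> P Q [s sP] [t tQ]; exists (s ++ t) => x [Ax Hx]; split.
      by apply: sP; split => // i Hi; apply: Hx; apply: lin_app; left.
    by apply: tQ; split => // i Hi; apply: Hx; apply: lin_app; right.
  - by move=> P Q PQ [s sP]; exists s; exact: subset_trans PQ.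
have FA : F A by exists [::] => x [].
have [p [Ap clp]] := cA F FF FA.
exists p; split => // i; apply: (cf i) => B nB.
have Ffi : F (f i) by exists [:: i] => x [_ H]; apply: H; left.
exact: clp Ffi nB.
Qed.

Lemma compact_cover_list (A : set T) (I : Type) (g : I -> set T) :
  compact A -> (forall i, open (g i)) -> A `<=` \bigcup_i g i ->
  exists s, A `<=` [set x | exists2 i, lin i s & g i x].
Proof.
move=> cA og cov; apply: contrapT => nex.
have [x [Ax Hx]] : exists x, A x /\ forall i, (~` g i) x.
  apply: compact_fip => //.
    by move=> i; rewrite closedC.
  move=> s; apply: contrapT => ne; apply: nex; exists s => x Ax.
  apply: contrapT => nx; apply: ne; exists x; split => // i Hi gi.
  by apply: nx; exists i.
by have [i _ gi] := cov x Ax; exact: Hx gi.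
Qed.

Lemma open_local (S : set T) :
  (forall z, S z -> exists Q, [/\ open Q, Q z & Q `<=` S]) -> open S.
Proof.
move=> H; rewrite openE => z /H [Q [oQ Qz QS]].
rewrite /interior /=; apply: (filterS QS); apply: open_nbhs_nbhs; by split.
Qed.

Lemma closure_nbhsP (A : set T) x :
  closure A x <-> forall Q, open Q -> Q x -> A `&` Q !=set0.
Proof.
split.
  by move=> cl Q oQ Qx; apply: cl; apply: open_nbhs_nbhs; split.
move=> H B; rewrite nbhsE => -[Q [oQ Qx] QB].
have [y [Ay Qy]] := H Q oQ Qx; exists y; split => //; exact: QB.
Qed.

Lemma not_closure (A : set T) x :
  ~ closure A x -> exists Q, [/\ open Q, Q x & A `&` Q = set0].
Proof.
move=> ncl; apply: contrapT => nex; apply: ncl; apply/closure_nbhsP => Q oQ Qx.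
apply: contrapT => ne; apply: nex; exists Q; split => //.
by apply/seteqP; split => // y Hy; apply: ne; exists y.
Qed.

Lemma clopen_finter (I : Type) (f : I -> set T) s :
  (forall i, clopen (f i)) -> clopen (finter f s).
Proof.
move=> cf; elim: s => [|i s IH].
  have -> : finter f [::] = setT by apply/seteqP; split => // x _ i [].
  exact: clopenT.
have -> : finter f (i :: s) = f i `&` finter f s.
  apply/seteqP; split => x.
    by move=> H; split; [apply: H; left| move=> j Hj; apply: H; right].
  by move=> [H1 H2] j [<-|Hj] //; apply: H2.
exact: clopenI.
Qed.

End Gen.

Section Pries.
Context {T : topologicalType} (le : T -> T -> Prop).
Hypothesis HP : priestley_space le.

Lemma P_compact : compact [set: T].
Proof. by case: HP => -[]. Qed.

Lemma P_refl x : le x x. Proof. by case: HP => _ [r a t]. Qed.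
Lemma P_anti x y : le x y -> le y x -> x = y. Proof. by case: HP => _ [r a t] _; apply: a. Qed.
Lemma P_trans x y z : le x y -> le y z -> le x z. Proof. by case: HP => _ [r a t] _; apply: t. Qed.
Lemma P_sep x y : ~ le x y -> exists U : set T, [/\ clopen U, is_upset le U, U x & ~ U y].
Proof. by case: HP => _ _; apply. Qed.

Lemma compact_closed_P (A : set T) : closed A -> compact A.
Proof. by move=> cA; apply: (subclosed_compact cA P_compact). Qed.

Lemma down1_closed a : closed (downset le [set a]).
Proof.
rewrite -[downset _ _]setCK closedC; apply: open_local => z nz.
have nle : ~ le z a by move=> h; apply: nz; exists a.
have [U [[oU _] uU Uz Ua]] := P_sep nle.
exists U; split => // w Uw [b -> wb]; apply: Ua; exact: uU Uw wb.
Qed.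

Lemma sep_clopen x y : x <> y -> exists C : set T, [/\ clopen C, C x & ~ C y].
Proof.
move=> nxy.
have [nle|] := pselect (le x y); last first.
  by move=> /P_sep [U [cU _ Ux Uy]]; exists U.
have nyx : ~ le y x by move=> yx; apply: nxy; apply: P_anti.
have [U [cU _ Uy Ux]] := P_sep nyx.
by exists (~` U); split => //; exact: clopenC.
Qed.

Lemma clopen_base (N : set T) y : open N -> N y ->
  exists C, [/\ clopen C, C y & C `<=` N].
Proof.
move=> oN Ny.
pose I := {z : T | ~ N z}.
have Hsep (i : I) : exists C : set T, clopen C /\ C y /\ ~ C (sval i).
  have : y <> sval i by move=> e; apply: (svalP i); rewrite -e.
  by move=> /sep_clopen [C [cC Cy nC]]; exists C.
pose Cf (i : I) := sval (cid (Hsep i)).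
have HC i : clopen (Cf i) /\ Cf i y /\ ~ Cf i (sval i) := svalP (cid (Hsep i)).
have cN : compact (~` N) by apply: compact_closed_P; rewrite closedC.
have cov : ~` N `<=` \bigcup_i (~` Cf i).
  by move=> z nz; exists (exist _ z nz) => //; case: (HC (exist _ z nz)) => _ [].
have [s Hs] := @compact_cover_list T (~` N) I (fun i => ~` Cf i) cN
  (fun i => closed_openC (proj2 (proj1 (HC i)))) cov.
exists (finter Cf s); split.
- by apply: clopen_finter => i; case: (HC i).
- by move=> i _; case: (HC i) => _ [].
- move=> z Hz; apply: contrapT => nz; have [i Hi Ci] := Hs z nz.
  by apply: Ci; apply: Hz.
Qed.

Lemma below_minimal (V : set T) x : closed V -> V x ->
  exists m, minimals le V m /\ le m x.
Proof.
move=> cV Vx.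
pose S := {y : T | V y /\ le y x}.
pose R := fun s t : S => `[< le (sval t) (sval s) >].
have [||||t Ht] := @Zorn S R.
- by move=> s; apply/asboolP; apply: P_refl.
- by move=> r s t /asboolP h1 /asboolP h2; apply/asboolP; apply: P_trans h2 h1.
- move=> [s ps] [t pt] /asboolP h1 /asboolP h2; apply: eq_exist; exact: P_anti h2 h1.
- move=> A totA.
  have [[a0 Aa0]|nA] := pselect (exists a, A a); last first.
    exists (exist _ x (conj Vx (P_refl x))) => s As; exfalso; apply: nA; by exists s.
  pose J := {a : S | A a}.
  have [p [Vp Hp]] : exists p, V p /\ forall j : J, downset le [set sval (sval j)] p.
    apply: compact_fip.
    - exact: compact_closed_P.
    - by move=> j; apply: down1_closed.
    - move=> s.
      have [m [Am Hm]] : exists m, A m /\ forall j, lin j s -> le (sval m) (sval (sval j)).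
        elim: s => [|j s [m [Am Hm]]]; first by exists a0.
        have [/asboolP h|/asboolP h] := totA _ _ Am (svalP j).
          exists (sval j); split; first exact: svalP.
          move=> k [<-|Hk]; first exact: P_refl.
          by apply: P_trans h (Hm k Hk).
        exists m; split => // k [<-|Hk] //; exact: Hm.
      exists (sval m); split; first by case: (svalP m).
      by move=> j Hj; exists (sval (sval j)) => //; apply: Hm.
  have px : le p x.
    have [b -> pb] := Hp (exist _ a0 Aa0).
    by apply: P_trans pb _; case: (svalP a0).
  exists (exist _ p (conj Vp px)) => s As; apply/asboolP.
  by have [b -> pb] := Hp (exist _ s As).
- exists (sval t); split; last by case: (svalP t).
  split; first by case: (svalP t).
  move=> y Vy yt.
  have yx : le y x by apply: P_trans yt _; case: (svalP t).
  have := Ht (exist _ y (conj Vy yx)).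
  by move=> /(_ (asboolT yt)) /(f_equal sval).
Qed.

End Pries.

Lemma cover_compact_list {T : topologicalType} (K : set T) :
  (forall (I : Type) (g : I -> set T), (forall i, open (g i)) ->
     K `<=` \bigcup_i g i -> exists s, K `<=` [set x | exists2 i, lin i s & g i x]) ->
  compact K.
Proof.
move=> Hc F FF FK; apply: contrapT => ncl.
have Hk (k : {x | K x}) : exists QB : set T * set T,
    [/\ open QB.1, QB.1 (sval k), F QB.2 & QB.1 `&` QB.2 = set0].
  apply: contrapT => nex; apply: ncl; exists (sval k); split; first exact: svalP.
  move=> B Q FB nQ; rewrite nbhsE in nQ; case: nQ => Q' [oQ' Q'k] Q'Q.
  apply: contrapT => ne; apply: nex; exists (Q', B); split => //=.
  by apply/seteqP; split => // z [z1 z2]; apply: ne; exists z; split => //; apply: Q'Q.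
pose QB k := sval (cid (Hk k)).
have HQB k := svalP (cid (Hk k)).
have [s Hs] := Hc _ (fun k => (QB k).1) (fun k => (let: And4 a _ _ _ := HQB k in a))
  (fun z Kz => ex_intro2 _ _ (exist _ z Kz) Logic.I (let: And4 _ b _ _ := HQB (exist _ z Kz) in b)).
have FB : F (K `&` finter (fun k => (QB k).2) s).
  apply: filterI => //; elim: s {Hs} => [|k s IH].
    by apply: filterS filterT => x _ i [].
  apply: (filterS (P := (QB k).2 `&` finter (fun k => (QB k).2) s)).
    by move=> x [h1 h2] i [<-|Hi] //; apply: h2.
  by apply: filterI => //; case: (HQB k).
have [x [Kx Hx]] := filter_ex FB.
have [k Hk' Qx] := Hs x Kx.
have [_ _ _ e] := HQB k.
have : ((QB k).1 `&` (QB k).2) x by split => //; apply: Hx.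
by rewrite e.
Qed.

Lemma closed_funion {T : topologicalType} (I : Type) (f : I -> set T) s :
  (forall i, closed (f i)) -> closed [set x | exists2 i, lin i s & f i x].
Proof.
move=> cf; elim: s => [|i s IH].
  have -> : [set x | exists2 i0, lin i0 [::] & f i0 x] = set0.
    by apply/seteqP; split => // x [].
  exact: closed0.
have -> : [set x | exists2 j, lin j (i :: s) & f j x] =
    f i `|` [set x | exists2 j, lin j s & f j x].
  apply/seteqP; split => x.
    by move=> [j [<-|Hj] fx]; [left|right; exists j].
  by case=> [fx|[j Hj fx]]; [exists i => //; left|exists j => //; right].
exact: closedU.
Qed.

Section LSp.
Context {T : topologicalType} (le : T -> T -> Prop).
Hypothesis HL : L_space le.

Lemma L_pries : priestley_space le. Proof. by case: HL. Qed.
Lemma L_down A : clopen A -> clopen (downset le A). Proof. by case: HL => _ H _; apply: H. Qed.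
Lemma L_clopen U : open U -> is_upset le U -> open (closure U).
Proof. by case: HL => _ _ H; apply: H. Qed.

Lemma cl_upset U : is_upset le U -> is_upset le (closure U).
Proof.
move=> uU x y clx xy; apply: contrapT => ncl.
have [N [oN Ny UN]] := not_closure ncl.
have [C [cC Cy CN]] := clopen_base L_pries oN Ny.
have [oD _] := L_down cC.
have Dx : downset le C x by exists y.
have [u [Uu [c Cc uc]]] := (closure_nbhsP U x).1 clx _ oD Dx.
have : (U `&` N) c by split; [exact: uU Uu uc|exact: CN].
by rewrite UN.
Qed.

Lemma cl_ClopUp U : open U -> is_upset le U -> ClopUp le (closure U).
Proof.
move=> oU uU; split; last exact: cl_upset.
split; [exact: L_clopen|exact: closed_closure].
Qed.

Lemma spatial_prime y U : spatial_part le y -> is_upset le U -> closure U y -> U y.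
Proof.
rewrite /spatial_part /= => -[oD _] uU cly.
have Dy : downset le [set y] y by exists y => //; apply: P_refl L_pries y.
have [u [Uu [b -> ub]]] := (closure_nbhsP U y).1 cly _ oD Dy.
exact: uU Uu ub.
Qed.

Lemma core_upset U : is_upset le (core le U).
Proof. move=> x y [V [cV VU] Vx] xy; exists V => //; case: cV => _ [_ uV _]; exact: uV Vx xy. Qed.

Lemma core_open U : open (core le U).
Proof. by apply: bigcup_open => V [[[oV _] _] _]. Qed.

Lemma core_sub U : core le U `<=` U.
Proof. by move=> x [V [_ VU] Vx]; apply: VU. Qed.

Lemma scott_above V v : scott_upset le V -> V v ->
  exists m, [/\ V m, spatial_part le m & le m v].
Proof.
move=> [cV _ mY] Vv.
have [m [[Vm mm] mv]] := below_minimal L_pries cV Vv.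
by exists m; split => //; apply: mY.
Qed.

Lemma closed_compact (V : set T) : closed V -> compact V.
Proof. exact: (compact_closed_P L_pries). Qed.

Lemma finter_upset (I : Type) (f : I -> set T) s :
  (forall i, is_upset le (f i)) -> is_upset le (finter f s).
Proof. by move=> uf x y Hx xy i Hi; apply: uf (Hx i Hi) xy. Qed.

Lemma funion_upset (I : Type) (f : I -> set T) s :
  (forall i, is_upset le (f i)) -> is_upset le [set x | exists2 i, lin i s & f i x].
Proof. by move=> uf x y [i Hi fx] xy; exists i => //; apply: uf fx xy. Qed.

End LSp.

Section Alg.
Context {T : topologicalType} (le : T -> T -> Prop).
Hypothesis HA : algebraic_L_space le.
Let HL : L_space le := proj1 HA.

Lemma trace_incl W1 W2 : ClopUp le W1 -> ClopUp le W2 ->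
  (forall y, spatial_part le y -> W1 y -> W2 y) -> W1 `<=` W2.
Proof.
move=> cW1 [[_ cW2] uW2] H.
have sub : core le W1 `<=` W2.
  move=> v [V [[_ sV] VW] Vv].
  have [m [Vm Ym mv]] := scott_above HL sV Vv.
  exact: uW2 (H m Ym (VW m Vm)) mv.
move=> x /(proj2 HA W1 cW1) clx.
by apply: cW2; apply: closureS sub _ clx.
Qed.

Lemma trace_eq W1 W2 : ClopUp le W1 -> ClopUp le W2 ->
  (forall y, spatial_part le y -> (W1 y <-> W2 y)) -> W1 = W2.
Proof.
move=> c1 c2 H; apply/seteqP; split; apply: trace_incl => // y Yy; by case: (H y Yy).
Qed.

Lemma spatial_core W y : ClopUp le W -> spatial_part le y -> W y ->
  exists V, [/\ ClopSUp le V, V `<=` W & V y].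
Proof.
move=> cW Yy Wy.
have : core le W y.
  apply: (spatial_prime HL Yy (@core_upset _ le W)).
  exact: (proj2 HA W cW y Wy).
by move=> [V [cV VW] Vy]; exists V.
Qed.

Lemma trace_cover V (I : Type) (g : I -> set T) :
  closed V -> V `<=` core le V -> (forall i, open (g i)) -> (forall i, is_upset le (g i)) ->
  (forall y, spatial_part le y -> V y -> exists i, g i y) ->
  exists s, V `<=` [set x | exists2 i, lin i s & g i x].
Proof.
move=> cV Vc og ug H.
apply: compact_cover_list (closed_compact HL cV) og _.
move=> v /Vc [V' [[_ sV'] V'V] V'v].
have [m [V'm Ym mv]] := scott_above HL sV' V'v.
have [i gm] := H m Ym (V'V m V'm).
by exists i => //; exact: ug gm mv.
Qed.

End Alg.

Definition spt (T : topologicalType) (le : T -> T -> Prop) := {x : T | spatial_part le x}.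

HB.instance Definition _ (T : topologicalType) (le : T -> T -> Prop) := gen_eqMixin (spt le).
HB.instance Definition _ (T : topologicalType) (le : T -> T -> Prop) := gen_choiceMixin (spt le).

Definition spt_op (T : topologicalType) (le : T -> T -> Prop) : set_system (spt le) :=
  [set Q | exists U : set T, [/\ open U, is_upset le U & Q = sval @^-1` U]].
Arguments spt_op {T} le.

Lemma spt_opT (T : topologicalType) (le : T -> T -> Prop) : spt_op le setT.
Proof. by exists setT; split => //; exact: openT. Qed.

Lemma spt_opI (T : topologicalType) (le : T -> T -> Prop) : setI_closed (spt_op le).
Proof.
move=> A B [U [oU uU ->]] [V [oV uV ->]]; exists (U `&` V); split => //.
- exact: openI.
- by move=> x y [Ux Vx] xy; split; [exact: uU Ux xy|exact: uV Vx xy].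
Qed.

Lemma spt_op_bigU (T : topologicalType) (le : T -> T -> Prop) (I : Type) (f : I -> set (spt le)) :
  (forall i, spt_op le (f i)) -> spt_op le (\bigcup_i f i).
Proof.
move=> H; pose U i := sval (cid (H i)).
have HU i : [/\ open (U i), is_upset le (U i) & f i = sval @^-1` (U i)] := svalP (cid (H i)).
exists (\bigcup_i U i); split.
- by apply: bigcup_open => i _; case: (HU i).
- by move=> x y [i _ Ux] xy; exists i => //; case: (HU i) => _ uU _; exact: uU Ux xy.
- apply/seteqP; split => x [i _ Hx]; exists i => //; case: (HU i) => _ _ e.
    by rewrite e in Hx.
  by rewrite e.
Qed.

HB.instance Definition _ (T : topologicalType) (le : T -> T -> Prop) :=
  isOpenTopological.Build (spt le) (@spt_opT T le) (@spt_opI T le) (@spt_op_bigU T le).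

Lemma spt_openE (T : topologicalType) (le : T -> T -> Prop) (A : set (spt le)) :
  open A <-> exists U : set T, [/\ open U, is_upset le U & A = sval @^-1` U].
Proof. by []. Qed.

Lemma closedCE {T : topologicalType} (A : set T) : closed A -> open (~` A).
Proof. exact: closed_openC. Qed.

Section SptAlg.
Context {T : topologicalType} (le : T -> T -> Prop).
Hypothesis HA : algebraic_L_space le.
Let HL : L_space le := proj1 HA.
Let HP : priestley_space le := L_pries HL.

Lemma spt_closure1 (x z : spt le) :
  closure [set x] z <-> forall U, open U -> is_upset le U -> U (sval z) -> U (sval x).
Proof.
rewrite closure_nbhsP; split.
  move=> H U oU uU Uz.
  have oQ : open (sval @^-1` U : set (spt le)) by apply/spt_openE; exists U.
  by have [w [-> Uw]] := H _ oQ Uz.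
move=> H Q /spt_openE [U [oU uU ->]] Qz; exists x; split => //; exact: H.
Qed.

Lemma trace_compact (V : set T) : closed V -> V `<=` core le V ->
  compact (sval @^-1` V : set (spt le)).
Proof.
move=> cV Vc; apply: cover_compact_list => I g og cov.
have Hg i : exists U : set T, [/\ open U, is_upset le U & g i = sval @^-1` U].
  by apply/spt_openE; apply: og.
pose U i := sval (cid (Hg i)).
have HU i : [/\ open (U i), is_upset le (U i) & g i = sval @^-1` (U i)] := svalP (cid (Hg i)).
have covU : forall y, spatial_part le y -> V y -> exists i, U i y.
  move=> y Yy Vy; have [i _] := cov (exist _ y Yy) Vy.
  by case: (HU i) => _ _ -> Uy; exists i.
have [s Hs] := trace_cover HA cV Vc (fun i => let: And3 a _ _ := HU i in a)
   (fun i => let: And3 _ b _ := HU i in b) covU.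
exists s => x Vx; have [i Hi Ux] := Hs _ Vx; exists i => //.
by case: (HU i) => _ _ ->.
Qed.

Lemma ClopSUp_core V : ClopSUp le V -> V `<=` core le V.
Proof. by move=> cV x Vx; exists V => //; split. Qed.

Lemma spt_KB : compactly_based (spt le).
Proof.
move=> Q x /spt_openE [U [oU uU ->]] Ux.
have cW := cl_ClopUp HL oU uU.
have [V [cV VW Vx]] := spatial_core HA cW (svalP x) (@subset_closure T U _ Ux).
exists (sval @^-1` V); split => //.
- apply/spt_openE; exists V; split => //; first by case: cV => -[].
  by case: cV => _ [].
- apply: trace_compact; first by case: cV => _ [].
  exact: ClopSUp_core.
- by move=> z Vz; apply: (spatial_prime HL (svalP z) uU); apply: VW.
Qed.

Lemma spt_compact_open (K : set (spt le)) : open K -> compact K ->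
  exists V, [/\ ClopUp le V, V `<=` core le V & K = sval @^-1` V].
Proof.
move=> /spt_openE [U [oU uU eK]] cK.
have cW := cl_ClopUp HL oU uU.
have Hk (k : {k | K k}) : exists V, [/\ ClopSUp le V, V `<=` closure U & V (sval (sval k))].
  apply: (spatial_core HA cW (svalP (sval k))).
  exact: (@subset_closure T U _ (eq_ind _ (fun S : set (spt le) => S (sval k)) (svalP k) _ eK)).
pose Vf k := sval (cid (Hk k)).
have HV k : [/\ ClopSUp le (Vf k), Vf k `<=` closure U & Vf k (sval (sval k))] := svalP (cid (Hk k)).
have og : forall k, open (sval @^-1` Vf k : set (spt le)).
  move=> k; apply/spt_openE; exists (Vf k); case: (HV k) => -[[? _] [_ ? _]] _ _; by split.
have cov : K `<=` \bigcup_k (sval @^-1` Vf k).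
  by move=> z Kz; exists (exist _ z Kz) => //; case: (HV (exist _ z Kz)).
have [s Hs] := compact_cover_list cK og cov.
- pose V := [set x | exists2 i, lin i s & Vf i x].
  exists V; split.
  + split; last by apply: funion_upset => i; case: (HV i) => -[_ [_ ? _]].
    split; last by apply: closed_funion => i; case: (HV i) => -[_ [? _ _]].
    apply: open_local => x [i Hi Vx]; exists (Vf i); split => //.
      by case: (HV i) => -[[]].
    by move=> y Vy; exists i.
  + move=> x [i Hi Vx]; exists (Vf i) => //; split; first by case: (HV i).
    by move=> y Vy; exists i.
  + apply/seteqP; split => z.
      by move=> Kz; have [i Hi Vz] := Hs z Kz; exists i.
    move=> [i _ Vz]; rewrite eK; apply: (spatial_prime HL (svalP z) uU).
    by case: (HV i) => _ sub _; apply: sub.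
Qed.

Lemma spt_sober : sober (spt le).
Proof.
move=> C [cC nC irr].
have /spt_openE [U [oU uU eU]] := closedCE cC.
pose W := closure U.
have cW : ClopUp le W := cl_ClopUp HL oU uU.
have HW (z : spt le) : W (sval z) <-> ~ C z.
  split.
    move=> Wz; have : U (sval z) by apply: (spatial_prime HL (svalP z) uU).
    by have := f_equal (fun S => S z) eU => /= <-.
  move=> nCz; apply: subset_closure.
  by have := f_equal (fun S => S z) eU => /= <-.
have prime : forall W1 W2, ClopUp le W1 -> ClopUp le W2 -> W1 `&` W2 `<=` W ->
    W1 `<=` W \/ W2 `<=` W.
  move=> W1 W2 c1 c2 sub.
  have cA (Wi : set T) : ClopUp le Wi -> closed (~` (sval @^-1` Wi : set (spt le))).
    move=> [[oWi _] uWi]; rewrite closedC; apply/spt_openE; by exists Wi.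
  have := irr _ _ (cA _ c1) (cA _ c2).
  case.
  - move=> c Cc; apply: contrapT => /not_orP [n1 n2].
    have h1 : W1 (sval c) by apply: contrapT.
    have h2 : W2 (sval c) by apply: contrapT.
    by have /HW := sub _ (conj h1 h2).
  - move=> CA; left; apply: (trace_incl HA c1 cW) => y Yy W1y; apply: contrapT => nWy.
    have : C (exist _ y Yy) by apply: contrapT => nC'; apply: nWy; apply/(HW (exist _ y Yy)).
    by move=> /CA.
  - move=> CB; right; apply: (trace_incl HA c2 cW) => y Yy W2y; apply: contrapT => nWy.
    have : C (exist _ y Yy) by apply: contrapT => nC'; apply: nWy; apply/(HW (exist _ y Yy)).
    by move=> /CB.
have [y0 Cy0] := nC.
have nWy0 : ~ W (sval y0) by move=> /HW.
pose I := {W' : set T | ClopUp le W' /\ ~ (W' `<=` W)}.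
have [x [nWx Hx]] : exists x, (~` W) x /\ forall i : I, sval i x.
  apply: compact_fip.
  - apply: (closed_compact HL); rewrite closedC; by case: cW => -[].
  - by move=> i; case: (svalP i) => -[[_ ?] _] _.
  - move=> s.
    have : ClopUp le (finter (fun i : I => sval i) s) /\ ~ (finter (fun i : I => sval i) s `<=` W).
      elim: s => [|i s [cM nM]].
        split.
          split; first by apply: clopen_finter => i; case: (svalP i) => -[].
          by apply: finter_upset => i; case: (svalP i) => -[].
        by move=> sub; apply: nWy0; apply: sub => i [].
      split.
        split; first by apply: clopen_finter => j; case: (svalP j) => -[].
        by apply: finter_upset => j; case: (svalP j) => -[].
      move=> sub.
      have [|h|h] := prime (sval i) _ (proj1 (svalP i)) cM.
      + move=> z [z1 z2]; apply: sub => j [<-|Hj] //; exact: z2.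
      + by case: (svalP i) => _; apply.
      + by apply: nM.
    move=> [_ nM]; apply: contrapT => ne; apply: nM => z Mz; apply: contrapT => nWz.
    by apply: ne; exists z.
have Hdown : downset le [set x] = ~` W.
  apply/seteqP; split => z.
    by move=> [b -> zb] Wz; apply: nWx; case: cW => _ uW; apply: uW Wz zb.
  move=> nWz; exists x => //; apply: contrapT => nzx.
  have [W' [cW' uW' W'z W'x]] := P_sep HP nzx.
  have nsub : ~ (W' `<=` W) by move=> sub; apply: nWz; apply: sub.
  by apply: W'x; apply: (Hx (exist _ W' (conj (conj cW' uW') nsub))).
have Yx : spatial_part le x.
  rewrite /spatial_part /= Hdown; apply: clopenC; by case: cW.
pose x' : spt le := exist _ x Yx.
have Cx' : C x' by apply: contrapT => /HW.
have HC : C = closure [set x'].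
  apply/seteqP; split => z.
    move=> Cz; apply/spt_closure1 => U' oU' uU' U'z.
    have : downset le [set x] (sval z) by rewrite Hdown => /HW.
    by move=> [b -> zb]; apply: uU' U'z zb.
  move=> /spt_closure1 H; apply: contrapT => /HW Wz.
  by case: cW => [[oW _] uW]; apply: nWx; apply: (H W).
exists x'; split => // x'' e.
have Cx'' : C x'' by rewrite e; apply: subset_closure.
have h1 : le (sval x'') x.
  have : downset le [set x] (sval x'') by rewrite Hdown => /HW.
  by move=> [b -> ?].
have h2 : le x (sval x'').
  have : closure [set x''] x' by rewrite -e.
  move=> /spt_closure1 H; apply: contrapT => nle.
  have [W' [[oW' _] uW' W'x W'x'']] := P_sep HP nle.
  by apply: W'x''; apply: H.
case: x'' {e Cx''} h1 h2 => v pv /= h1 h2; apply: eq_exist.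
exact: (P_anti HP h2 h1).
Qed.

End SptAlg.

Section SpMap.
Context {T1 T2 : topologicalType} (le1 : T1 -> T1 -> Prop) (le2 : T2 -> T2 -> Prop).
Hypotheses (HL1 : L_space le1) (HL2 : L_space le2).

Lemma spatial_map (f : T1 -> T2) y : L_morphism le1 le2 f ->
  spatial_part le1 y -> spatial_part le2 (f y).
Proof.
move=> [cf mf clf] Yy.
have HP2 := L_pries HL2.
pose U := ~` downset le2 [set f y].
have oU : open U by apply: closed_openC; exact: (down1_closed HP2 (a := f y)).
have uU : is_upset le2 U.
  move=> z w Uz zw [b -> wb]; apply: Uz; exists (f y) => //. exact: (P_trans HP2 zw wb).
have ncl : ~ closure (f @^-1` U) y.
  move: Yy; rewrite /spatial_part /= => -[oD _] cly.
  have Dy : downset le1 [set y] y by exists y => //; apply: P_refl (L_pries HL1) y.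
  have [x [Ux [b -> xb]]] := (closure_nbhsP _ y).1 cly _ oD Dy.
  by apply: Ux; exists (f y) => //; apply: mf.
have nclU : ~ closure U (f y).
  by move=> h; apply: ncl; rewrite -(clf U oU uU).
rewrite /spatial_part /=.
have -> : downset le2 [set f y] = ~` closure U.
  apply/seteqP; split => z.
    by move=> Dz clz; apply: nclU; apply: (cl_upset HL2 uU clz); case: Dz => b -> .
  move=> nz; apply: contrapT => nD; apply: nz; apply: subset_closure; exact: nD.
apply: clopenC; by case: (cl_ClopUp HL2 oU uU).
Qed.

Definition spt_map (f : T1 -> T2) (Hf : L_morphism le1 le2 f) : spt le1 -> spt le2 :=
  fun y => exist _ (f (sval y)) (spatial_map Hf (svalP y)).

Lemma spt_map_coherent (f : T1 -> T2) (Hf : coherent_L_morphism le1 le2 f)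
  (HA1 : algebraic_L_space le1) (HA2 : algebraic_L_space le2) :
  coherent_map (spt_map (proj1 Hf)).
Proof.
have [Lf cohf] := Hf; have [cf mf _] := Lf.
split.
  apply/continuousP => A /spt_openE [U [oU uU ->]].
  apply/spt_openE; exists (f @^-1` U); split => //.
  - by move/continuousP: cf; apply.
  - by move=> x y Ux xy; apply: uU Ux (mf _ _ xy).
move=> K oK cK.
have [V [[[oV cV] uV] Vc eK]] := spt_compact_open HA2 oK cK.
have -> : spt_map (proj1 Hf) @^-1` K = sval @^-1` (f @^-1` V).
  by rewrite eK.
apply: (trace_compact HA1).
  by move/continuous_closedP: cf; apply.
move=> x Vx; apply: (cohf V); first by split => //; split.
exact: Vc.
Qed.

End SpMap.

Section PF.
Context {Z : topologicalType}.

Definition pfilter (P : set (set Z)) : Prop :=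
  [/\ forall V, P V -> open V, P setT, ~ P set0,
      forall V W, P V -> P W -> P (V `&` W)
    & (forall V W, open W -> P V -> V `<=` W -> P W) /\
      (forall V W, open V -> open W -> P (V `|` W) -> P V \/ P W)].

Lemma pf_open P V : pfilter P -> P V -> open V. Proof. by move=> [h _ _ _ _] PV; apply: h. Qed.
Lemma pf_T P : pfilter P -> P setT. Proof. by case. Qed.
Lemma pf_0 P : pfilter P -> ~ P set0. Proof. by case. Qed.
Lemma pf_I P V W : pfilter P -> P V -> P W -> P (V `&` W). Proof. by move=> [_ _ _ h _] PV PW; apply: h. Qed.
Lemma pf_S P V W : pfilter P -> open W -> P V -> V `<=` W -> P W.
Proof. by move=> [_ _ _ _ [h _]] oW PV VW; apply: h PV VW. Qed.
Lemma pf_U P V W : pfilter P -> open V -> open W -> P (V `|` W) -> P V \/ P W.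
Proof. by move=> [_ _ _ _ [_ h]] oV oW PU; apply: h. Qed.

Lemma pft (F : set (set Z)) W :
  (forall V, F V -> open V) -> F setT -> (forall V V', F V -> F V' -> F (V `&` V')) ->
  (forall V V', open V' -> F V -> V `<=` V' -> F V') -> open W -> ~ F W ->
  exists P, [/\ pfilter P, F `<=` P & ~ P W].
Proof.
move=> Fo FT FI FS oW nFW.
pose Pf := [set G : set (set Z) | [/\ forall V, G V -> open V,
   (exists V, G V) -> F `<=` G,
   forall V V', G V -> G V' -> G (V `&` V'),
   forall V V', open V' -> G V -> V `<=` V' -> G V' & ~ G W]].
have [M [[Mo MF MI MS MW] Mmax]] : exists A, Pf A /\ forall B, A `<` B -> ~ Pf B.
  apply: Zorn_bigcup => G GP Gtot; split.
  - by move=> V [A GA AV]; have [h _ _ _ _] := GP A GA; apply: h.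
  - move=> [V [A GA AV]]; have [_ h _ _ _] := GP A GA.
    by move=> U FU; exists A => //; apply: h => //; exists V.
  - move=> V V' [A GA AV] [B GB BV'].
    have [AB|BA] := Gtot _ _ GA GB.
      have [_ _ h _ _] := GP B GB; exists B => //; apply: h => //; exact: AB.
    have [_ _ h _ _] := GP A GA; exists A => //; apply: h => //; exact: BA.
  - move=> V V' oV' [A GA AV] VV'; exists A => //.
    by have [_ _ _ h _] := GP A GA; apply: h AV VV'.
  - by move=> [A GA AW]; have [_ _ _ _ h] := GP A GA; apply: h.
have FP : Pf F by split => // _.
have MT : M setT.
  apply: contrapT => nMT.
  have [[V MV]|nM] := pselect (exists V, M V).
    by apply: nMT; apply: MF => //; exists V.
  apply: (Mmax F) => //; split.
    by move=> V MV; exfalso; apply: nM; exists V.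
  by move=> sub; apply: nMT; apply: sub.
have MF' : F `<=` M by apply: MF; exists setT.
exists M; split => //; split => //; last split => //.
- by move=> M0; apply: MW; apply: MS M0 _ => //.
- move=> V1 V2 oV1 oV2 MU; apply: contrapT => /not_orP [n1 n2].
  have ext (V : set Z) : open V -> ~ M V -> exists A, M A /\ A `&` V `<=` W.
    move=> oV nMV; apply: contrapT => nex.
    pose M1 := [set U | open U /\ exists A, M A /\ A `&` V `<=` U].
    apply: (Mmax M1); split.
    + by move=> A MA; split; [exact: Mo|exists A; split => // z [] ].
    + by move=> sub; apply: nMV; apply: sub; split => //; exists setT; split => // z [].
    + by move=> U [].
    + by move=> _ U FU; split; [exact: Fo|exists U; split; [exact: MF'|move=> z []]].
    + move=> U U' [oU [A [MA AU]]] [oU' [B [MB BU']]]; split; first exact: openI.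
      exists (A `&` B); split; first exact: MI.
      by move=> z [[Az Bz] Vz]; split; [apply: AU|apply: BU'].
    + move=> U U' oU' [oU [A [MA AU]]] UU'; split => //; exists A; split => //.
      exact: subset_trans AU UU'.
    + by move=> [_ [A [MA AW]]]; apply: nex; exists A.
  have [A1 [MA1 h1]] := ext V1 oV1 n1.
  have [A2 [MA2 h2]] := ext V2 oV2 n2.
  apply: MW; apply: (MS (A1 `&` A2 `&` (V1 `|` V2))) => //.
    exact: (MI _ _ (MI _ _ MA1 MA2) MU).
  by move=> z [[a1 a2] [v1|v2]]; [apply: h1|apply: h2].
Qed.

Lemma pft1 V W : open V -> open W -> ~ (V `<=` W) ->
  exists P, [/\ pfilter P, P V & ~ P W].
Proof.
move=> oV oW nVW.
have [||||||P [pP FP nPW]] := pft (F := [set U | open U /\ V `<=` U]) (W := W).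
- by move=> U [].
- by split => //; exact: openT.
- by move=> U U' [oU VU] [oU' VU']; split; [exact: openI|move=> z Vz; split; [apply: VU|apply: VU']].
- by move=> U U' oU' [oU VU] UU'; split => //; exact: subset_trans UU'.
- exact: oW.
- by move=> [_ h]; apply: nVW.
by exists P; split => //; apply: FP; split.
Qed.

Lemma pft2 P V W : pfilter P -> open V -> open W ->
  ~ (exists A, P A /\ A `&` V `<=` W) ->
  exists Q, [/\ pfilter Q, P `<=` Q, Q V & ~ Q W].
Proof.
move=> pP oV oW nex.
have [||||||Q [pQ FQ nQW]] := pft (F := [set U | open U /\ exists A, P A /\ A `&` V `<=` U]) (W := W).
- by move=> U [].
- by split; [exact: openT|exists setT; split => //; exact: pf_T].
- move=> U U' [oU [A [PA AU]]] [oU' [B [PB BU']]]; split; first exact: openI.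
  exists (A `&` B); split; first exact: pf_I.
  by move=> z [[Az Bz] Vz]; split; [apply: AU|apply: BU'].
- move=> U U' oU' [oU [A [PA AU]]] UU'; split => //; exists A; split => //.
  exact: subset_trans AU UU'.
- exact: oW.
- by move=> [_ h]; apply: nex.
exists Q; split => //.
- move=> A PA; apply: FQ; split; first exact: pf_open PA.
  by exists A; split => // z [].
- by apply: FQ; split => //; exists setT; split; [exact: pf_T|move=> z []].
Qed.

End PF.

Definition pf (Z : topologicalType) := {P : set (set Z) | pfilter P}.
HB.instance Definition _ (Z : topologicalType) := gen_eqMixin (pf Z).
HB.instance Definition _ (Z : topologicalType) := gen_choiceMixin (pf Z).

Definition phi {Z : topologicalType} (V : set Z) : set (pf Z) := [set P | sval P V].
Definition basic {Z : topologicalType} (V W : set Z) : set (pf Z) := phi V `\` phi W.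

Definition pf_op (Z : topologicalType) : set_system (pf Z) :=
  [set Q | forall P, Q P -> exists V W, [/\ open V, open W, basic V W P & basic V W `<=` Q]].
Arguments pf_op : clear implicits.

Lemma pf_opT Z : pf_op Z setT.
Proof.
move=> P _; exists setT, set0; split => //; [exact: openT|exact: open0|].
split; [exact: pf_T (svalP P)|exact: pf_0 (svalP P)].
Qed.

Lemma pf_opI Z : setI_closed (pf_op Z).
Proof.
move=> A B hA hB P [AP BP].
have [V1 [W1 [oV1 oW1 [V1P W1P] sA]]] := hA P AP.
have [V2 [W2 [oV2 oW2 [V2P W2P] sB]]] := hB P BP.
exists (V1 `&` V2), (W1 `|` W2); split; [exact: openI|exact: openU| |].
  split; first exact: pf_I (svalP P) V1P V2P.
  by move=> /(pf_U (svalP P) oW1 oW2) [].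
move=> Q [h1 h2]; split.
  apply: sA; split; first by apply: pf_S (svalP Q) oV1 h1 _ => z [].
  by move=> h; apply: h2; apply: pf_S (svalP Q) (openU oW1 oW2) h _ => z ?; left.
apply: sB; split; first by apply: pf_S (svalP Q) oV2 h1 _ => z [].
by move=> h; apply: h2; apply: pf_S (svalP Q) (openU oW1 oW2) h _ => z ?; right.
Qed.

Lemma pf_op_bigU Z (I : Type) (f : I -> set (pf Z)) :
  (forall i, pf_op Z (f i)) -> pf_op Z (\bigcup_i f i).
Proof.
move=> H P [i _ fP]; have [V [W [oV oW bP sub]]] := H i P fP.
by exists V, W; split => // Q bQ; exists i => //; apply: sub.
Qed.

HB.instance Definition _ (Z : topologicalType) :=
  isOpenTopological.Build (pf Z) (@pf_opT Z) (@pf_opI Z) (@pf_op_bigU Z).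

Lemma pf_openE (Z : topologicalType) (A : set (pf Z)) :
  open A <-> pf_op Z A.
Proof. by []. Qed.

Lemma ultra_compl {T : Type} (F : set_system T) (A : set T) :
  UltraFilter F -> ~ F A -> F (~` A).
Proof.
move=> UF nFA.
pose G := [set B | exists C, F C /\ C `&` ~` A `<=` B].
have PG : ProperFilter G.
  apply: Build_ProperFilter_ex.
    move=> B [C [FC CB]]; apply: contrapT => ne; apply: nFA.
    apply: filterS FC => x Cx; apply: contrapT => nAx; apply: ne; exists x; exact: CB.
  split.
  - by exists setT; split => //; exact: filterT.
  - move=> B B' [C [FC CB]] [C' [FC' CB']]; exists (C `&` C'); split; first exact: filterI.
    by move=> x [[c c'] a]; split; [apply: CB|apply: CB'].
  - by move=> B B' BB' [C [FC CB]]; exists C; split => //; exact: subset_trans BB'.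
have FG : F `<=` G by move=> B FB; exists B; split => // x [].
have := @max_filter _ F UF G PG FG => eGF.
by rewrite -eGF; exists setT; split; [exact: filterT|move=> x []].
Qed.

Section PFtop.
Context {Z : topologicalType}.
Local Notation pfZ := (pf Z).

Definition pf_le (P Q : pfZ) : Prop := sval P `<=` sval Q.

Lemma phi_open (V : set Z) : open V -> open (phi V).
Proof.
move=> oV; apply/pf_openE => P PV; exists V, set0; split => //; first exact: open0.
  by split => //; apply: pf_0 (svalP P).
by move=> Q [].
Qed.

Lemma phi_closed (V : set Z) : open V -> closed (phi V).
Proof.
move=> oV; rewrite -[phi V]setCK closedC; apply/pf_openE => P nPV.
exists setT, V; split => //; first exact: openT.
  by split => //; apply: pf_T (svalP P).
by move=> Q [].
Qed.

Lemma phi_clopen (V : set Z) : open V -> clopen (phi V).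
Proof. by move=> oV; split; [exact: phi_open|exact: phi_closed]. Qed.

Lemma phi_upset (V : set Z) : is_upset pf_le (phi V).
Proof. by move=> P Q PV PQ; apply: PQ. Qed.

Lemma basic_open (V W : set Z) : open V -> open W -> open (basic V W).
Proof. move=> oV oW; apply: openI; [exact: phi_open|exact: closed_openC (phi_closed oW)]. Qed.

Lemma pf_eq (P Q : pfZ) : sval P = sval Q -> P = Q.
Proof. by case: P Q => p pp [q pq] /= e; apply: eq_exist. Qed.

Lemma pf_compact : compact [set: pfZ].
Proof.
rewrite compact_ultra => F UF _.
pose P := [set V : set Z | open V /\ F (phi V)].
have phiT : phi [set: Z] = setT by apply/seteqP; split => // Q _; apply: pf_T (svalP Q).
have phi0 : phi (set0 : set Z) = set0 by apply/seteqP; split => // Q; apply: pf_0 (svalP Q).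
have pP : pfilter P.
  split.
  - by move=> V [].
  - by split; [exact: openT|rewrite phiT; exact: filterT].
  - by move=> [_]; rewrite phi0; apply: filter_not_empty.
  - move=> V W [oV FV] [oW FW]; split; first exact: openI.
    by apply: filterS (filterI FV FW) => Q [h1 h2]; apply: pf_I (svalP Q) h1 h2.
  split.
  - move=> V W oW [oV FV] VW; split => //; apply: filterS FV => Q QV.
    exact: pf_S (svalP Q) oW QV VW.
  - move=> V W oV oW [oU FU]; apply: contrapT => /not_orP [n1 n2].
    have c1 : F (~` phi V) by apply: ultra_compl => // h; apply: n1.
    have c2 : F (~` phi W) by apply: ultra_compl => // h; apply: n2.
    apply: (@filter_not_empty _ F).
    apply: filterS (filterI FU (filterI c1 c2)) => Q [QU [nV nW]].
    by have [|] := pf_U (svalP Q) oV oW QU.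
exists (exist _ P pP); split => //.
move=> B /=; rewrite nbhsE => -[Q [oQ Qp] QB].
have [V [W [oV oW [PV nPW] sub]]] := (pf_openE Q).1 oQ _ Qp.
rewrite nbhs_filterE; have FF : Filter F by apply: ultra_proper.
apply: (filterS QB); apply: (filterS sub); apply: filterI; first by case: PV.
apply: ultra_compl => // FW; apply: nPW; by split.
Qed.

Lemma pf_sep (P Q : pfZ) : ~ pf_le P Q ->
  exists U : set pfZ, [/\ clopen U, is_upset pf_le U, U P & ~ U Q].
Proof.
move=> nPQ; have [V PV nQV] : exists2 V, sval P V & ~ sval Q V.
  apply: contrapT => nex; apply: nPQ => V PV; apply: contrapT => nQ; apply: nex; by exists V.
exists (phi V); split => //; first exact: phi_clopen (pf_open (svalP P) PV).
exact: phi_upset.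
Qed.

Lemma pf_sepC (p q : pfZ) : p <> q -> exists U : set pfZ, [/\ clopen U, U p & ~ U q].
Proof.
move=> npq; have [h|h] := pselect (pf_le p q).
  have nqp : ~ pf_le q p by move=> h'; apply: npq; apply: pf_eq; apply/seteqP; split.
  have [U [cU _ Uq nUp]] := pf_sep nqp.
  by exists (~` U); split => //; exact: clopenC.
by have [U [cU _ Up nUq]] := pf_sep h; exists U.
Qed.

Lemma pf_pries : priestley_space pf_le.
Proof.
split; last exact: pf_sep.
- split; first exact: pf_compact.
  + move=> p q h; apply: contrapT => /pf_sepC [U [[oU cU] Up nUq]].
    have [x [? ?]] := h U (~` U) (open_nbhs_nbhs (conj oU Up)) (open_nbhs_nbhs (conj (closed_openC cU) nUq)).
    by [].
  + apply: zero_dimension_totally_disconnected => x y /eqP nxy.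
    exact: pf_sepC.
- split.
  + by move=> P.
  + by move=> P Q h1 h2; apply: pf_eq; apply/seteqP; split.
  + by move=> P Q R h1 h2; apply: subset_trans h2.
Qed.

End PFtop.

Lemma open_finter {T : topologicalType} (I : Type) (f : I -> set T) s :
  (forall i, lin i s -> open (f i)) -> open (finter f s).
Proof.
elim: s => [|i s IH] H.
  have -> : finter f [::] = setT by apply/seteqP; split => // x _ j [].
  exact: openT.
have -> : finter f (i :: s) = f i `&` finter f s.
  apply/seteqP; split => x.
    by move=> h; split; [apply: h; left| move=> j Hj; apply: h; right].
  by move=> [h1 h2] j [<-|Hj] //; apply: h2.
apply: openI; first by apply: H; left.
by apply: IH => j Hj; apply: H; right.
Qed.

Lemma open_funion {T : topologicalType} (I : Type) (f : I -> set T) s :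
  (forall i, open (f i)) -> open [set x | exists2 i, lin i s & f i x].
Proof.
move=> H; apply: open_local => x [i Hi fx]; exists (f i); split => //.
by move=> y fy; exists i.
Qed.

Section PFL.
Context {Z : topologicalType}.
Local Notation pfZ := (pf Z).

Lemma pf_finter (P : set (set Z)) (I : Type) (f : I -> set Z) s :
  pfilter P -> (forall i, lin i s -> P (f i)) -> P (finter f s).
Proof.
move=> pP; elim: s => [|i s IH] H.
  have o : open (finter f [::]) by apply: open_finter => j [].
  by apply: (pf_S pP o (pf_T pP)) => // j [].
have o : open (finter f (i :: s)).
  by apply: open_finter => j Hj; apply: (pf_open pP); apply: H.
apply: (pf_S pP o (pf_I pP (H i (or_introl erefl)) (IH (fun j Hj => H j (or_intror Hj))))).
by move=> x [h1 h2] j [<-|Hj] //; apply: h2.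
Qed.

Lemma pf_funion (P : set (set Z)) (I : Type) (f : I -> set Z) s :
  pfilter P -> (forall i, open (f i)) -> P [set x | exists2 i, lin i s & f i x] ->
  exists2 i, lin i s & P (f i).
Proof.
move=> pP fo; elim: s => [|i s IH] H.
  exfalso; apply: (pf_0 pP); apply: pf_S pP open0 H _ => x [j []].
have e : [set x | exists2 j, lin j (i :: s) & f j x] = f i `|` [set x | exists2 j, lin j s & f j x].
  apply/seteqP; split => x.
    by move=> [j [<-|Hj] fx]; [left|right; exists j].
  by case=> [fx|[j Hj fx]]; [exists i => //; left|exists j => //; right].
rewrite e in H; have [h|h] := pf_U pP (fo i) (open_funion s fo) H.
  by exists i => //; left.
by have [j Hj Pj] := IH h; exists j => //; right.
Qed.

Lemma pf_compact_closed (C : set pfZ) : closed C -> compact C.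
Proof. exact: (compact_closed_P pf_pries). Qed.

Lemma upset_phi (Q : set pfZ) (P : pfZ) : open Q -> is_upset pf_le Q -> Q P ->
  exists V, [/\ open V, sval P V & phi V `<=` Q].
Proof.
move=> oQ uQ QP; apply: contrapT => nex.
pose I := {V : set Z | sval P V}.
have [R [nQR HR]] : exists R, (~` Q) R /\ forall i : I, phi (sval i) R.
  apply: compact_fip.
  - by apply: pf_compact_closed; rewrite closedC.
  - by move=> i; apply: phi_closed; apply: (pf_open (svalP P)); apply: (svalP i).
  - move=> s.
    have PM : sval P (finter (fun i : I => sval i) s).
      by apply: pf_finter (svalP P) _ => i _; apply: (svalP i).
    have oM : open (finter (fun i : I => sval i) s) by apply: (pf_open (svalP P)).
    have : ~ (phi (finter (fun i : I => sval i) s) `<=` Q).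
      by move=> sub; apply: nex; exists (finter (fun i : I => sval i) s); split.
    move=> nsub; apply: contrapT => ne; apply: nsub => R RM; apply: contrapT => nQ.
    apply: ne; exists R; split => // i Hi.
    apply: (pf_S (svalP R) _ RM); first by apply: (pf_open (svalP P)); apply: (svalP i).
    by move=> x Mx; apply: Mx.
apply: nQR; apply: uQ QP _ => V PV.
exact: (HR (exist _ V PV)).
Qed.

Definition Vstar (Q : set pfZ) : set Z := \bigcup_(V in [set V | open V /\ phi V `<=` Q]) V.

Lemma Vstar_open Q : open (Vstar Q).
Proof. by apply: bigcup_open => V []. Qed.

Lemma cl_openup (Q : set pfZ) : open Q -> is_upset pf_le Q -> closure Q = phi (Vstar Q).
Proof.
move=> oQ uQ; apply/seteqP; split.
  have cl : closed (phi (Vstar Q)) by apply: phi_closed; exact: Vstar_open.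
  rewrite [X in _ `<=` X](closure_id _).1 //; apply: closureS => P QP.
  have [V [oV PV VQ]] := upset_phi oQ uQ QP.
  by apply: (pf_S (svalP P) (Vstar_open Q) PV) => x Vx; exists V.
move=> P PV; apply/closure_nbhsP => Q' oQ' Q'P.
have [A [W [oA oW [PA nPW] sub]]] := (pf_openE Q').1 oQ' _ Q'P.
have [U [oU UQ] nAU] : exists2 U, open U /\ phi U `<=` Q & ~ (A `&` U `<=` W).
  apply: contrapT => nex; apply: nPW.
  apply: (pf_S (svalP P) oW (pf_I (svalP P) PA PV)).
  move=> x [Ax [U [oU UQ] Ux]]; apply: contrapT => nW; apply: nex; exists U => //.
  by move=> h; apply: nW; apply: h.
have [R [pR RAU nRW]] := pft1 (openI oA oU) oW nAU.
pose R' : pfZ := exist _ R pR.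
exists R'; split.
  by apply: UQ; apply: (pf_S pR oU RAU) => x [].
apply: sub; split; last by [].
by apply: (pf_S pR oA RAU) => x [].
Qed.

Definition imp (V W : set Z) : set Z := \bigcup_(U in [set U | open U /\ U `&` V `<=` W]) U.

Lemma imp_open V W : open (imp V W).
Proof. by apply: bigcup_open => U []. Qed.

Lemma down_basic (V W : set Z) : open V -> open W ->
  downset pf_le (basic V W) = ~` phi (imp V W).
Proof.
move=> oV oW; apply/seteqP; split.
  move=> P [Q [QV nQW] PQ] PI.
  apply: nQW; apply: (pf_S (svalP Q) oW (pf_I (svalP Q) (PQ _ PI) QV)).
  by move=> x [[U [oU UW] Ux] Vx]; apply: UW.
move=> P nPI.
have nex : ~ (exists A, sval P A /\ A `&` V `<=` W).
  move=> [A [PA AW]]; apply: nPI; apply: (pf_S (svalP P) (imp_open V W) PA).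
  by move=> x Ax; exists A => //; split => //; apply: (pf_open (svalP P)).
have [Q [pQ PQ QV nQW]] := pft2 (svalP P) oV oW nex.
by exists (exist _ Q pQ).
Qed.

Lemma down_basicP (V W : set Z) (P : pfZ) : open V -> open W ->
  downset pf_le (basic V W) P <-> ~ sval P (imp V W).
Proof. by move=> oV oW; rewrite down_basic. Qed.

Lemma pf_down_clopen (C : set pfZ) : clopen C -> clopen (downset pf_le C).
Proof.
move=> [oC cC].
pose I := {p : set Z * set Z | [/\ open p.1, open p.2 & basic p.1 p.2 `<=` C]}.
have cov : C `<=` \bigcup_(i : I) basic (sval i).1 (sval i).2.
  move=> P CP; have [V [W [oV oW bP sub]]] := (pf_openE C).1 oC _ CP.
  by exists (exist _ (V, W) (And3 oV oW sub)).
have og : forall i : I, open (basic (sval i).1 (sval i).2).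
  by move=> i; case: (svalP i) => oV oW _; apply: basic_open.
have [s Hs] := compact_cover_list (pf_compact_closed cC) og cov.
have -> : downset pf_le C =
    [set x | exists2 i, lin i s & (~` phi (imp (sval i).1 (sval i).2)) x].
  apply/seteqP; split.
    move=> P [Q CQ PQ]; have [i Hi bQ] := Hs Q CQ; exists i => //.
    case: (svalP i) => oV oW _.
    by apply/down_basicP => //; exists Q.
  move=> P [i Hi]; case: (svalP i) => oV oW sub.
  move/down_basicP => /(_ oV oW) [Q bQ PQ].
  by exists Q => //; apply: sub.
split.
  apply: open_funion => i.
  by apply: closed_openC; apply: phi_closed; exact: imp_open.
apply: closed_funion => i.
by rewrite closedC; apply: phi_open; exact: imp_open.
Qed.

Lemma pf_Lspace : L_space (@pf_le Z).
Proof.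
split; first exact: pf_pries.
  exact: pf_down_clopen.
move=> U oU uU; rewrite cl_openup //; apply: phi_open; exact: Vstar_open.
Qed.

End PFL.

Section NF.
Context {Z : topologicalType}.
Local Notation pfZ := (pf Z).

Definition nf (z : Z) : set (set Z) := [set V | open V /\ V z].

Lemma nf_pfilter z : pfilter (nf z).
Proof.
split.
- by move=> V [].
- by split => //; exact: openT.
- by case.
- by move=> V W [oV Vz] [oW Wz]; split => //; exact: openI.
split.
- by move=> V W oW [oV Vz] VW; split => //; apply: VW.
- by move=> V W oV oW [_ [Vz|Wz]]; [left|right].
Qed.

Definition nbf (z : Z) : pfZ := exist _ (nf z) (nf_pfilter z).

Lemma down_nbf z : downset (@pf_le Z) [set nbf z] = ~` phi (~` closure [set z]).
Proof.
have oW : open (~` closure [set z]) by apply: closed_openC; exact: closed_closure.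
apply/seteqP; split.
  move=> P [b -> Pz] PW; have [_ h] := Pz _ PW; apply: h.
  exact: subset_closure.
move=> P nPW; exists (nbf z) => //.
move=> V PV; split; first exact: (pf_open (svalP P)).
apply: contrapT => nVz; apply: nPW.
apply: (pf_S (svalP P) oW PV) => x Vx clx.
have oV : open V := pf_open (svalP P) PV.
have [y [-> Vz]] := (closure_nbhsP _ x).1 clx V oV Vx.
by apply: nVz.
Qed.

Lemma spatial_nbf z : spatial_part (@pf_le Z) (nbf z).
Proof.
rewrite /spatial_part /= down_nbf; apply: (@clopenC _ _ set0); apply: (@phi_clopen Z).
by apply: closed_openC; exact: closed_closure.
Qed.

Lemma ClopUp_phi (C : set pfZ) : ClopUp (@pf_le Z) C -> exists V, open V /\ C = phi V.
Proof.
move=> [[oC cC] uC]; exists (Vstar C); split; first exact: Vstar_open.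
by rewrite -cl_openup //; apply: (closure_id C).1.
Qed.

Lemma spatial_inv (P : pfZ) : sober Z -> spatial_part (@pf_le Z) P -> exists z, P = nbf z.
Proof.
move=> sob; rewrite /spatial_part /= => cD.
pose D := downset (@pf_le Z) [set P].
have cU : ClopUp (@pf_le Z) (~` D).
  split; first exact: clopenC.
  move=> x y nDx xy [b -> yb]; apply: nDx; exists P => //; exact: subset_trans yb.
have [W [oW eW]] := ClopUp_phi cU.
have HD (Q : pfZ) : D Q <-> ~ sval Q W.
  split.
    by move=> DQ QW; have : (~` D) Q by rewrite eW.
  move=> nQW; apply: contrapT => nDQ; apply: nQW.
  by have : (~` D) Q by []; rewrite eW.
have DP : D P by exists P.
have nPW : ~ sval P W by apply/HD.
have irr : irreducible_closed (~` W).
  split; first by rewrite closedC.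
    apply: contrapT => ne; apply: nPW.
    apply: (pf_S (svalP P) oW (pf_T (svalP P))) => x _; apply: contrapT => nWx.
    by apply: ne; exists x.
  move=> A B cA cB sub; apply: contrapT => /not_orP [nA nB].
  have get (A' : set Z) : closed A' -> ~ (~` W `<=` A') -> sval P (~` A').
    move=> cA' nA'.
    have nsub : ~ (~` A' `<=` W).
      move=> h; apply: nA' => x nWx; apply: contrapT => nAx; apply: nWx; exact: h.
    have [Q [pQ QA nQW]] := pft1 (closed_openC cA') oW nsub.
    have : D (exist _ Q pQ) by apply/HD.
    by move=> [b -> QP]; apply: QP.
  apply: nPW; apply: (pf_S (svalP P) oW (pf_I (svalP P) (get A cA nA) (get B cB nB))).
  move=> x [nAx nBx]; apply: contrapT => nWx.
  by have [] := sub x nWx.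
have [z [ez _]] := sob _ irr.
have eW' : W = ~` closure [set z] by rewrite -ez setCK.
have HD' (Q : pfZ) : D Q <-> downset (@pf_le Z) [set nbf z] Q.
  by rewrite down_nbf HD eW'.
exists z; apply: pf_eq; apply/seteqP; split.
  by have := (HD' P).1 DP => -[b -> ?].
have : D (nbf z) by apply/HD'; exists (nbf z).
by move=> [b -> ?].
Qed.

End NF.

Section Alg2.
Context {Z : topologicalType}.
Local Notation pfZ := (pf Z).

Lemma phiK_scott (K : set Z) : open K -> compact K -> ClopSUp (@pf_le Z) (phi K).
Proof.
move=> oK cK; split; first exact: phi_clopen.
split; [exact: phi_closed|exact: phi_upset|].
move=> P [PK Pmin].
have [z [Kz zP]] : exists z, K z /\ pf_le (nbf z) P.
  apply: contrapT => nex.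
  have Hz (k : {z | K z}) : exists U, [/\ open U, U (sval k) & ~ sval P U].
    apply: contrapT => nU; apply: nex; exists (sval k); split; first exact: svalP.
    move=> U [oU Uk]; apply: contrapT => nPU; apply: nU; by exists U.
  pose U k := sval (cid (Hz k)).
  have HU k : [/\ open (U k), U k (sval k) & ~ sval P (U k)] := svalP (cid (Hz k)).
  have og k : open (U k) by case: (HU k).
  have cov : K `<=` \bigcup_k U k.
    by move=> x Kx; exists (exist _ x Kx) => //; case: (HU (exist _ x Kx)).
  have [s Hs] := compact_cover_list cK og cov.
  have PU : sval P [set x | exists2 i, lin i s & U i x].
    exact: (pf_S (svalP P) (open_funion s og) PK Hs).
  have [i _ PUi] := pf_funion (svalP P) og PU.
  by case: (HU i) => _ _; apply.
have e : nbf z = P by apply: Pmin => //; split => //.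
by rewrite -e; apply: spatial_nbf.
Qed.

Lemma pf_alg : compactly_based Z -> algebraic_L_space (@pf_le Z).
Proof.
move=> kb; split; first exact: pf_Lspace.
move=> C cC; have [V [oV ->]] := ClopUp_phi cC.
move=> P PV; apply/closure_nbhsP => Q' oQ' Q'P.
have [A [W [oA oW [PA nPW] sub]]] := (pf_openE Q').1 oQ' _ Q'P.
have [K [[oK cK KAV] nKW]] : exists K, [/\ open K, compact K & K `<=` A `&` V] /\ ~ (K `<=` W).
  apply: contrapT => nex; apply: nPW.
  apply: (pf_S (svalP P) oW (pf_I (svalP P) PA PV)) => x AVx.
  have [K [oK cK Kx KAV]] := kb _ x (openI oA oV) AVx.
  apply: contrapT => nWx; apply: nex; exists K; split => // KW.
  by apply: nWx; apply: KW.
have [R [pR RK nRW]] := pft1 oK oW nKW.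
exists (exist _ R pR); split.
  exists (phi K); last exact: RK.
  split; first exact: phiK_scott.
  by move=> Q QK; apply: (pf_S (svalP Q) oV QK) => x /KAV [].
apply: sub; split => //=.
by apply: (pf_S pR oA RK) => x /KAV [].
Qed.

Lemma scott_compact (V : set Z) : sober Z -> open V -> ClopSUp (@pf_le Z) (phi V) -> compact V.
Proof.
move=> sob oV [_ [cphi _ mY]].
apply: cover_compact_list => I g og cov; apply: contrapT => nex.
have [Q [QV Hg]] : exists Q, phi V Q /\ forall i, (~` phi (g i)) Q.
  apply: compact_fip.
  - exact: pf_compact_closed.
  - by move=> i; rewrite closedC; apply: phi_open.
  - move=> s.
    have nsub : ~ (V `<=` [set x | exists2 i, lin i s & g i x]).
      by move=> h; apply: nex; exists s.
    have [R [pR RV nRU]] := pft1 oV (open_funion s og) nsub.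
    exists (exist _ R pR); split => // i Hi gi; apply: nRU.
    by apply: (pf_S pR (open_funion s og) gi) => x gx; exists i.
have [m [[Vm mmin] mQ]] := below_minimal (@pf_pries Z) cphi QV.
have [z ez] := spatial_inv sob (mY m (conj Vm mmin)).
have Vz : V z by have := Vm; rewrite ez => -[].
have [i _ gz] := cov z Vz.
apply: (Hg i); apply: mQ; rewrite ez; split => //.
Qed.

End Alg2.

Section PFMap.
Context {Z1 Z2 : topologicalType} (g : Z1 -> Z2).
Hypothesis cg : continuous g.

Let og V : open V -> open (g @^-1` V).
Proof. by move=> oV; move/continuousP: cg; apply. Qed.

Definition pfm_set (P : set (set Z1)) : set (set Z2) := [set V | open V /\ P (g @^-1` V)].

Lemma pfm_pfilter (P : pf Z1) : pfilter (pfm_set (sval P)).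
Proof.
have pP := svalP P.
split.
- by move=> V [].
- split; first exact: openT.
  by apply: (pf_S pP (og openT) (pf_T pP)).
- by move=> [_ h]; apply: (pf_0 pP); apply: (pf_S pP open0 h).
- move=> V W [oV PV] [oW PW]; split; first exact: openI.
  exact: (pf_S pP (og (openI oV oW)) (pf_I pP PV PW)).
split.
- move=> V W oW [oV PV] VW; split => //.
  by apply: (pf_S pP (og oW) PV) => x /VW.
- move=> V W oV oW [_ PU].
  by have [h|h] := pf_U pP (og oV) (og oW) PU; [left|right].
Qed.

Definition pfm (P : pf Z1) : pf Z2 := exist _ (pfm_set (sval P)) (pfm_pfilter P).

Lemma pfm_phi V : open V -> pfm @^-1` phi V = phi (g @^-1` V).
Proof.
move=> oV; apply/seteqP; split => P; first by case.
by move=> h; split.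
Qed.

Lemma pfm_cont : continuous pfm.
Proof.
apply/continuousP => Q oQ; apply/pf_openE => P QP.
have [V [W [oV oW [PV nPW] sub]]] := (pf_openE Q).1 oQ _ QP.
exists (g @^-1` V), (g @^-1` W); split; [exact: og|exact: og| |].
  by split; [case: PV|move=> h; apply: nPW; split].
move=> R [RV nRW]; apply: sub; split; first by split.
by case.
Qed.

Lemma pfm_mono P Q : pf_le P Q -> pf_le (pfm P) (pfm Q).
Proof. by move=> PQ V [oV PV]; split => //; apply: PQ. Qed.

Lemma pfm_L : L_morphism (@pf_le Z1) (@pf_le Z2) pfm.
Proof.
split; [exact: pfm_cont|exact: pfm_mono|].
move=> O oO uO; apply/seteqP; split.
  move=> P; rewrite /preimage /= cl_openup // => -[_ PV].
  apply/closure_nbhsP => Q' oQ' Q'P.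
  have [A [W [oA oW [PA nPW] sub]]] := (pf_openE Q').1 oQ' _ Q'P.
  have [U [oU UO] nAU] : exists2 U, open U /\ phi U `<=` O & ~ (A `&` g @^-1` U `<=` W).
    apply: contrapT => nex; apply: nPW.
    apply: (pf_S (svalP P) oW (pf_I (svalP P) PA PV)).
    move=> x [Ax [U [oU UO] Ux]]; apply: contrapT => nW; apply: nex; exists U => //.
    by move=> h; apply: nW; apply: h.
  have [R [pR RAU nRW]] := pft1 (openI oA (og oU)) oW nAU.
  exists (exist _ R pR); split.
    by apply: UO; split => //=; apply: (pf_S pR (og oU) RAU) => x [].
  apply: sub; split; last by [].
  by apply: (pf_S pR oA RAU) => x [].
have cl : closed (pfm @^-1` closure O).
  by move/continuous_closedP: pfm_cont; apply; exact: closed_closure.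
rewrite [X in _ `<=` X](closure_id _).1 //; apply: closureS => P OP.
exact: subset_closure.
Qed.

Lemma pfm_coh : sober Z2 -> (forall K, open K -> compact K -> compact (g @^-1` K)) ->
  coherent_L_morphism (@pf_le Z1) (@pf_le Z2) pfm.
Proof.
move=> sob cohg; split; first exact: pfm_L.
move=> C cC; have [V [oV eC]] := ClopUp_phi cC.
move=> P [S [sS SC] SP].
have [V' [oV' eS]] := ClopUp_phi (conj (proj1 sS) (let: And3 _ u _ := proj2 sS in u)).
rewrite eS in sS SP SC.
have cV' : compact V' by apply: scott_compact sob oV' sS.
exists (phi (g @^-1` V')); last by case: SP.
split; first exact: phiK_scott (og oV') (cohg _ oV' cV').
move=> Q QV'; apply: SC; split => //.
Qed.

End PFMap.

Section Iso.
Context {X X' : topologicalType} (le : X -> X -> Prop) (le' : X' -> X' -> Prop).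
Variables (f : X -> X') (h : X' -> X).
Hypotheses (hf : forall x, h (f x) = x) (fh : forall y, f (h y) = y).
Hypotheses (cf : continuous f) (ch : continuous h).

Lemma homeo_coherent_map : coherent_map f.
Proof.
split => // K oK cK.
have -> : f @^-1` K = h @` K.
  apply/seteqP; split => x.
    by move=> Kfx; exists (f x) => //.
  by move=> [y Ky <-]; rewrite /preimage /= fh.
by apply: continuous_compact => //; apply: continuous_subspaceT.
Qed.

Hypotheses (mf : forall x y, le x y -> le' (f x) (f y)) (mh : forall x y, le' x y -> le (h x) (h y)).

Lemma iso_coherent_L : coherent_L_morphism le le' f.
Proof.
split.
  split => // U oU uU; apply/seteqP; split => x.
    move=> /closure_nbhsP H; apply/closure_nbhsP => Q oQ Qx.
    have oQ' : open (h @^-1` Q) by move/continuousP: ch; apply.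
    have [u [Uu Qu]] := H _ oQ' (ltac:(by rewrite /preimage /= hf)).
    by exists (h u); split => //; rewrite /preimage /= fh.
  move=> /closure_nbhsP H; apply/closure_nbhsP => Q oQ Qx.
  have oQ' : open (f @^-1` Q) by move/continuousP: cf; apply.
  have [w [Uw Qw]] := H _ oQ' Qx.
  by exists (f w).
move=> U cU x [V [[[oV cV] [_ uV mV]] VU] Vx].
exists (f @^-1` V); last by [].
split; last by move=> y Vy; apply: VU.
split.
  split; first by move/continuousP: cf; apply.
  by move/continuous_closedP: cf; apply.
split.
- by move/continuous_closedP: cf; apply.
- by move=> a b Va ab; apply: uV Va (mf ab).
- move=> m [Vm mmin].
  have Ym : spatial_part le' (f m).
    apply: mV; split => // y Vy ym.
    have e : h y = m by apply: mmin; [rewrite /preimage /= fh|rewrite -(hf m); apply: mh].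
    by rewrite -e fh.
  rewrite /spatial_part /= in Ym *.
  have -> : downset le [set m] = f @^-1` downset le' [set f m].
    apply/seteqP; split => z.
      by move=> [b eb zb]; exists (f m) => //; apply: mf; rewrite -eb.
    move=> [b -> zb]; exists m => //; rewrite -(hf z) -(hf m); exact: mh.
  case: Ym => oD cD; split.
    by move/continuousP: cf; apply.
  by move/continuous_closedP: cf; apply.
Qed.

End Iso.

Section KBIso.
Context {Z : topologicalType}.
Hypothesis sob : sober Z.
Local Notation SY := (spt (@pf_le Z)).

Lemma irr_closure1 (z : Z) : irreducible_closed (closure [set z]).
Proof.
split; [exact: closed_closure|by exists z; apply: subset_closure|].
move=> A B cA cB sub.
have [Az|Bz] := sub z (subset_closure (erefl z)).
  left; rewrite [X in _ `<=` X](closure_id A).1 //; apply: closureS => x ->. exact: Az.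
right; rewrite [X in _ `<=` X](closure_id B).1 //; apply: closureS => x ->. exact: Bz.
Qed.

Lemma nbf_inj (z z' : Z) : nbf z = nbf z' -> z = z'.
Proof.
move=> e.
have ecl : closure [set z] = closure [set z'].
  have H (a b : Z) : nf a = nf b -> closure [set a] `<=` closure [set b].
    move=> eab x /closure_nbhsP cl; apply/closure_nbhsP => Q oQ Qx.
    have [y [-> Qa]] := cl Q oQ Qx.
    have : nf b Q by rewrite -eab.
    by move=> [_ Qb]; exists b.
  have e' : nf z = nf z' by have := f_equal sval e.
  by apply/seteqP; split; apply: H.
have [x [ex uniq]] := sob (irr_closure1 z).
by rewrite -(uniq z erefl) -(uniq z' ecl).
Qed.

Definition etaK (z : Z) : SY := exist _ (nbf z) (spatial_nbf z).

Definition zetaK (y : SY) : Z := sval (cid (spatial_inv sob (svalP y))).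

Lemma zetaK_spec y : sval y = nbf (zetaK y).
Proof. exact: (svalP (cid (spatial_inv sob (svalP y)))). Qed.

Lemma etaK_zetaK y : etaK (zetaK y) = y.
Proof. by case: y => p pp; apply: eq_exist; rewrite -zetaK_spec. Qed.

Lemma zetaK_etaK z : zetaK (etaK z) = z.
Proof. by apply: nbf_inj; rewrite -zetaK_spec. Qed.

Lemma etaK_cont : continuous etaK.
Proof.
apply/continuousP => Q /spt_openE [U [oU uU ->]].
apply: open_local => z Uz.
have [V [oV Vz VU]] := upset_phi oU uU Uz.
exists V; split => //; first by case: Vz.
by move=> w Vw; apply: VU; split.
Qed.

Lemma zetaK_cont : continuous zetaK.
Proof.
apply/continuousP => V oV; apply/spt_openE; exists (phi V); split.
- exact: phi_open.
- exact: phi_upset.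
- apply/seteqP; split => y.
    by move=> Vz; rewrite /preimage /= /phi /= zetaK_spec; split.
  by rewrite /preimage /= /phi /= zetaK_spec => -[].
Qed.

Lemma etaK_coh : coherent_map etaK.
Proof. exact: (homeo_coherent_map zetaK_etaK etaK_zetaK etaK_cont zetaK_cont). Qed.

Lemma zetaK_coh : coherent_map zetaK.
Proof. exact: (homeo_coherent_map etaK_zetaK zetaK_etaK zetaK_cont etaK_cont). Qed.

End KBIso.

Section AlgIso.
Context {T : topologicalType} (le : T -> T -> Prop).
Hypothesis HA : algebraic_L_space le.
Let HL : L_space le := proj1 HA.
Let HP : priestley_space le := L_pries HL.
Local Notation SY := (spt le).
Local Notation PF := (pf SY).

Definition Wof (O : set SY) : set T :=
  match pselect (exists W, ClopUp le W /\ O = sval @^-1` W) with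
  | left h => sval (cid h) | right _ => set0 end.

Lemma open_trace (O : set SY) : open O -> exists W, ClopUp le W /\ O = sval @^-1` W.
Proof.
move=> /spt_openE [U [oU uU ->]]; exists (closure U); split; first exact: cl_ClopUp.
apply/seteqP; split => y; first by move=> Uy; apply: subset_closure.
by move=> cly; apply: (spatial_prime HL (svalP y) uU).
Qed.

Lemma Wof_spec (O : set SY) : open O -> ClopUp le (Wof O) /\ O = sval @^-1` (Wof O).
Proof.
move=> oO; rewrite /Wof; case: pselect => [h|n]; first exact: (svalP (cid h)).
by exfalso; apply: n; apply: open_trace.
Qed.

Lemma Wof_char (O : set SY) (W : set T) : open O -> ClopUp le W -> O = sval @^-1` W -> Wof O = W.
Proof.
move=> oO cW eO; have [cO eO'] := Wof_spec oO.
apply: (trace_eq HA cO cW) => y Yy.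
have := f_equal (fun S : set SY => S (exist _ y Yy)) eO.
have := f_equal (fun S : set SY => S (exist _ y Yy)) eO'.
by move=> /= <- <-.
Qed.

Lemma Wof_mono (O O' : set SY) : open O -> open O' -> O `<=` O' -> Wof O `<=` Wof O'.
Proof.
move=> oO oO' sub; have [cO eO] := Wof_spec oO; have [cO' eO'] := Wof_spec oO'.
apply: (trace_incl HA cO cO') => y Yy Wy.
have : O (exist _ y Yy) by rewrite eO.
by move/sub; rewrite {1}eO'.
Qed.

Lemma Wof_open (O : set SY) : open O -> open (Wof O).
Proof. by move=> /Wof_spec [[[]]]. Qed.

Lemma Wof_closed (O : set SY) : open O -> closed (Wof O).
Proof. by move=> /Wof_spec [[[]]]. Qed.

Lemma Wof_upset (O : set SY) : open O -> is_upset le (Wof O).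
Proof. by move=> /Wof_spec [[]]. Qed.

Definition eps_set (x : T) : set (set SY) := [set O | open O /\ Wof O x].

Lemma eps_pfilter x : pfilter (eps_set x).
Proof.
have clT : ClopUp le [set: T].
  by split; [exact: clopenT|by []].
have cl0 : ClopUp le (set0 : set T).
  by split; [exact: clopen0|by move=> ? ? []].
split.
- by move=> V [].
- split; first exact: openT.
  by rewrite (Wof_char openT clT).
- move=> [oo h].
  have e : Wof set0 = set0 by apply: Wof_char => //; apply/seteqP; split => // y [].
  by rewrite e in h.
- move=> V W [oV Vx] [oW Wx]; split; first exact: openI.
  have [cV eV] := Wof_spec oV; have [cW eW] := Wof_spec oW.
  rewrite (@Wof_char _ (Wof V `&` Wof W) (openI oV oW)) //.
    split; first by apply: clopenI; [case: cV|case: cW].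
    by move=> a b [h1 h2] ab; split; [apply: (Wof_upset oV) h1 ab|apply: (Wof_upset oW) h2 ab].
  by rewrite {1}eV {1}eW.
split.
- move=> V W oW [oV Vx] VW; split => //; exact: Wof_mono VW _ Vx.
- move=> V W oV oW [oU Ux].
  have [cV eV] := Wof_spec oV; have [cW eW] := Wof_spec oW.
  rewrite (@Wof_char _ (Wof V `|` Wof W) oU) in Ux.
  + by case: Ux => h; [left|right].
  + split; first by apply: clopenU; [case: cV|case: cW].
    by move=> a b [h|h] ab; [left; apply: (Wof_upset oV) h ab|right; apply: (Wof_upset oW) h ab].
  + by rewrite {1}eV {1}eW.
Qed.

Definition eps (x : T) : PF := exist _ (eps_set x) (eps_pfilter x).

Lemma eps_le x y : pf_le (eps x) (eps y) <-> le x y.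
Proof.
split; last by move=> xy O [oO Ox]; split => //; apply: (Wof_upset oO) Ox xy.
move=> h; apply: contrapT => nxy.
have [W [cW uW Wx Wy]] := P_sep HP nxy.
have oO : open (sval @^-1` W : set SY) by apply/spt_openE; exists W; split => //; case: cW.
have eW : Wof (sval @^-1` W) = W by apply: Wof_char => //; split.
have := h (sval @^-1` W); rewrite /eps /= /eps_set /= eW.
by move=> /(_ (conj oO Wx)) [_].
Qed.

Lemma eps_inj x y : eps x = eps y -> x = y.
Proof.
move=> e; apply: (P_anti HP).
  by apply/eps_le; rewrite e.
by apply/eps_le; rewrite e.
Qed.

Lemma eps_surj (P : PF) : exists x, eps x = P.
Proof.
have pP := svalP P.
pose I := ({O : set SY | sval P O} + {O : set SY | open O /\ ~ sval P O})%type.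
pose f (i : I) : set T := match i with inl o => Wof (sval o) | inr o => ~` Wof (sval o) end.
have claim : forall s O N, sval P O -> open N -> ~ sval P N ->
    exists x, [/\ Wof O x, ~ Wof N x & finter f s x].
  elim => [|i s IH] O N PO oN nPN.
    have oO := pf_open pP PO.
    have nsub : ~ (Wof O `<=` Wof N).
      move=> sub; apply: nPN; apply: (pf_S pP oN PO).
      have [_ eO] := Wof_spec oO; have [_ eN] := Wof_spec oN.
      by rewrite eO eN => y /sub.
    apply: contrapT => nex; apply: nsub => x Ox; apply: contrapT => nNx.
    by apply: nex; exists x; split => // i [].
  case: i => [[Oa POa]|[Na [oNa nPNa]]].
    have PO2 : sval P (O `&` Oa) by apply: pf_I.
    have [x [Ox nNx Fx]] := IH _ _ PO2 oN nPN.
    have oO := pf_open pP PO; have oOa := pf_open pP POa.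
    exists x; split => //.
    - by apply: (Wof_mono (openI oO oOa) oO) Ox => y [].
    - move=> j [<-|Hj] //=; last exact: Fx.
      by apply: (Wof_mono (openI oO oOa) oOa) Ox => y [].
  have nPN2 : ~ sval P (N `|` Na) by move/(pf_U pP oN oNa) => [].
  have [x [Ox nNx Fx]] := IH _ _ PO (openU oN oNa) nPN2.
  exists x; split => //.
  - by move=> h; apply: nNx; apply: (Wof_mono oN (openU oN oNa)) h => y ?; left.
  - move=> j [<-|Hj] //=; last exact: Fx.
    by move=> h; apply: nNx; apply: (Wof_mono oNa (openU oN oNa)) h => y ?; right.
have [x [_ Hx]] : exists x, [set: T] x /\ forall i, f i x.
  apply: compact_fip.
  - by case: HP => -[].
  - case => [[Ob POb]|[Ob [oOb _]]] /=; first exact: Wof_closed (pf_open pP POb).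
    by rewrite closedC; apply: Wof_open.
  - move=> s; have [x [_ _ Fx]] := claim s setT set0 (pf_T pP) open0 (pf_0 pP).
    by exists x.
exists x; apply: pf_eq; apply/seteqP; split => O.
  move=> [oO Ox]; apply: contrapT => nPO.
  by have := Hx (inr (exist _ O (conj oO nPO))).
move=> PO; split; first exact: pf_open pP PO.
exact: (Hx (inl (exist _ O PO))).
Qed.

Lemma eps_cont : continuous eps.
Proof.
apply/continuousP => Q oQ; apply: open_local => x Qx.
have [V [W [oV oW [Vx nWx] sub]]] := (pf_openE Q).1 oQ _ Qx.
exists (Wof V `&` ~` Wof W); split.
- by apply: openI; [exact: Wof_open|apply: closed_openC; exact: Wof_closed].
- by split; [case: Vx|move=> h; apply: nWx; split].
- move=> z [Vz nWz]; apply: sub; split; first by split.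
  by case.
Qed.

Definition psi (P : PF) : T := sval (cid (eps_surj P)).

Lemma eps_psi P : eps (psi P) = P.
Proof. exact: (svalP (cid (eps_surj P))). Qed.

Lemma psi_eps x : psi (eps x) = x.
Proof. by apply: eps_inj; rewrite eps_psi. Qed.

Lemma psi_cont : continuous psi.
Proof.
apply/continuous_closedP => C cC.
have -> : psi @^-1` C = eps @` C.
  apply/seteqP; split => P.
    by move=> Cp; exists (psi P) => //; rewrite eps_psi.
  by move=> [x Cx <-]; rewrite /preimage /= psi_eps.
apply: compact_closed; first by case: (@pf_pries SY) => -[].
apply: continuous_compact; first exact: continuous_subspaceT eps_cont.
exact: (closed_compact HL cC).
Qed.

Lemma psi_mono P Q : pf_le P Q -> le (psi P) (psi Q).
Proof. by move=> PQ; apply/eps_le; rewrite !eps_psi. Qed.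

Lemma eps_coh : coherent_L_morphism le (@pf_le SY) eps.
Proof.
apply: (iso_coherent_L psi_eps eps_psi eps_cont psi_cont).
  by move=> x y /eps_le.
exact: psi_mono.
Qed.

Lemma psi_coh : coherent_L_morphism (@pf_le SY) le psi.
Proof.
apply: (iso_coherent_L eps_psi psi_eps psi_cont eps_cont psi_mono).
by move=> x y /eps_le.
Qed.

End AlgIso.

Lemma natA {T1 T2 : topologicalType} (le1 : T1 -> T1 -> Prop) (le2 : T2 -> T2 -> Prop)
  (HA1 : algebraic_L_space le1) (HA2 : algebraic_L_space le2)
  (HL1 : L_space le1) (HL2 : L_space le2) (f : T1 -> T2)
  (Lf : L_morphism le1 le2 f) (cg : continuous (spt_map HL1 HL2 Lf)) (P : pf (spt le1)) :
  f (psi HA1 P) = psi HA2 (pfm cg P).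
Proof.
have [cf mf _] := Lf.
apply: (@eps_inj _ _ HA2); rewrite eps_psi.
rewrite -{2}(eps_psi HA1 P); move: (psi HA1 P) => x.
apply: pf_eq; apply/seteqP; split => O /=.
  move=> [oO Ox]; split => //.
  have og : open (spt_map HL1 HL2 Lf @^-1` O) by move/continuousP: cg; apply.
  split => //.
  have [cW eO] := Wof_spec HA2 oO.
  have cW' : ClopUp le1 (f @^-1` Wof O).
    case: cW => -[oW clW] uW; split.
      split; [by move/continuousP: cf; apply|by move/continuous_closedP: cf; apply].
    by move=> a b Wa ab; apply: uW Wa (mf _ _ ab).
  rewrite (Wof_char HA1 og cW') //.
  apply/seteqP; split => z.
    by move=> Oz; have : O (spt_map HL1 HL2 Lf z) := Oz; rewrite {1}eO.
  by move=> h; rewrite /preimage /= {1}eO.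
move=> [oO [og Ox]]; split => //.
have [cW eO] := Wof_spec HA2 oO.
have cW' : ClopUp le1 (f @^-1` Wof O).
  case: cW => -[oW clW] uW; split.
    split; [by move/continuousP: cf; apply|by move/continuous_closedP: cf; apply].
  by move=> a b Wa ab; apply: uW Wa (mf _ _ ab).
move: Ox; rewrite (Wof_char HA1 og cW') //.
apply/seteqP; split => z.
  by move=> Oz; have : O (spt_map HL1 HL2 Lf z) := Oz; rewrite {1}eO.
by move=> h; rewrite /preimage /= {1}eO.
Qed.

Lemma natK {Z1 Z2 : topologicalType} (sob1 : sober Z1) (sob2 : sober Z2) (g : Z1 -> Z2)
  (cg : continuous g) (HL1 : L_space (@pf_le Z1)) (HL2 : L_space (@pf_le Z2))
  (Lg : L_morphism (@pf_le Z1) (@pf_le Z2) (pfm cg)) (y : spt (@pf_le Z1)) :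
  g (zetaK sob1 y) = zetaK sob2 (spt_map HL1 HL2 Lg y).
Proof.
rewrite -{2}(etaK_zetaK sob1 y); move: (zetaK sob1 y) => z.
have -> : spt_map HL1 HL2 Lg (etaK z) = etaK (g z).
  apply: eq_exist; apply: pf_eq; apply/seteqP; split => V /=.
    by move=> [oV [_ h]].
  move=> [oV h]; split => //; split => //.
  by apply: (proj1 (continuousP _) cg).
by rewrite zetaK_etaK.
Qed.

Definition Fob (X : AlgLSpace) : KBSobSpace :=
  @Build_KBSobSpace (spt (@alg_le X)) (conj (spt_KB (alg_ax X)) (spt_sober (alg_ax X))).

Definition Fmor (A B : AlgLSpace) (f : A -> B)
  (p : coherent_L_morphism (@alg_le A) (@alg_le B) f) : Fob A -> Fob B :=
  spt_map (proj1 (alg_ax A)) (proj1 (alg_ax B)) (proj1 p).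

Lemma Fmor_hom (A B : AlgLSpace) (f : A -> B)
  (p : coherent_L_morphism (@alg_le A) (@alg_le B) f) : coherent_map (Fmor p).
Proof. exact: (spt_map_coherent _ _ p (alg_ax A) (alg_ax B)). Qed.

Lemma Fmor_id (A : AlgLSpace) (p : coherent_L_morphism (@alg_le A) (@alg_le A) id) :
  Fmor p = id.
Proof. by apply: boolp.funext => -[y py]; apply: eq_exist. Qed.

Lemma Fmor_comp (A B E : AlgLSpace) (f : A -> B) (g : B -> E)
  (p : coherent_L_morphism (@alg_le A) (@alg_le B) f)
  (q : coherent_L_morphism (@alg_le B) (@alg_le E) g)
  (r : coherent_L_morphism (@alg_le A) (@alg_le E) (g \o f)) :
  Fmor r = Fmor q \o Fmor p.
Proof. by apply: boolp.funext => -[y py]; apply: eq_exist. Qed.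

Definition Ffun : Functor AlgLPries KBSob :=
  @Build_Functor AlgLPries KBSob Fob Fmor Fmor_hom Fmor_id Fmor_comp.

Definition Gob (Z : KBSobSpace) : AlgLSpace :=
  @Build_AlgLSpace (pf Z) (@pf_le Z) (pf_alg (proj1 (kb_ax Z))).

Definition Gmor (A B : KBSobSpace) (g : A -> B) (p : coherent_map g) : Gob A -> Gob B :=
  pfm (proj1 p).

Lemma Gmor_hom (A B : KBSobSpace) (g : A -> B) (p : coherent_map g) :
  coherent_L_morphism (@alg_le (Gob A)) (@alg_le (Gob B)) (Gmor p).
Proof. exact: (pfm_coh (proj1 p) (proj2 (kb_ax B)) (proj2 p)). Qed.

Lemma Gmor_id (A : KBSobSpace) (p : coherent_map (@id A)) : Gmor p = id.
Proof.
apply: boolp.funext => P; apply: pf_eq; apply/seteqP; split => V /=.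
  by move=> [].
by move=> PV; split => //; exact: pf_open (svalP P) PV.
Qed.

Lemma Gmor_comp (A B E : KBSobSpace) (f : A -> B) (g : B -> E)
  (p : coherent_map f) (q : coherent_map g) (r : coherent_map (g \o f)) :
  Gmor r = Gmor q \o Gmor p.
Proof.
apply: boolp.funext => P; apply: pf_eq; apply/seteqP; split => V /=.
  move=> [oV h]; split => //; split => //.
  by apply: (proj1 (continuousP _) (proj1 q)).
by move=> [oV [_ h]].
Qed.

Definition Gfun : Functor KBSob AlgLPries :=
  @Build_Functor KBSob AlgLPries Gob Gmor Gmor_hom Gmor_id Gmor_comp.

Lemma isoA : nat_iso_to_id Ffun Gfun.
Proof.
exists (fun A => psi (alg_ax A)), (fun A => eps (alg_ax A)).
split; first by move=> A; exact: psi_coh.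
split; first by move=> A; exact: eps_coh.
split.
  move=> A; split; apply: boolp.funext => x /=; [exact: psi_eps|exact: eps_psi].
move=> A B f p; apply: boolp.funext => P /=.
exact: natA.
Qed.

Lemma isoK : nat_iso_to_id Gfun Ffun.
Proof.
exists (fun B : KBSobSpace => zetaK (proj2 (kb_ax B))), (fun B : KBSobSpace => @etaK (kb_space B)).
split; first by move=> B; exact: zetaK_coh.
split; first by move=> B; exact: (etaK_coh (proj2 (kb_ax B))).
split.
  move=> B; split; apply: boolp.funext => x /=; [exact: zetaK_etaK|exact: etaK_zetaK].
move=> A B g p; apply: boolp.funext => y /=.
exact: natK.
Qed.

Theorem corollary4p12 : cat_equivalent AlgLPries KBSob.
Proof. by exists Ffun, Gfun; split; [exact: isoA|exact: isoK]. Qed.
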